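(* Let $X$ be a vertex-weighted simplicial complex on $n$ vertices, fix $k$, and let $U^{h}$ be a $\Pi^\pm_k$-projected $(1,\alpha,0)$-unitary encoding of $\Pi^\pm_kP\Pi^\pm_k$, i.e. $(\Pi^\pm_k\otimes\langle0^\alpha|)U^{h}(\Pi^\pm_k\otimes|0^\alpha\rangle)=\Pi^\pm_kP\Pi^\pm_k$. Let $V^{h}=((I_n\otimes HZ\otimes I)\otimes I_\alpha)U^{h}$, where $HZ$ (product of Hadamard and Pauli-$Z$) acts on qubit $n+1$. Then $(\Pi_k\otimes\langle0^\alpha|)V^{h}(\Pi_k\otimes|0^\alpha\rangle)=\frac{\Delta_k}{K\sqrt2}$.
   Context: Vertices $V=\{1,\dots,n\}$ with weights $w:V\to(0,\infty)$. $X$ is a family of nonempty subsets of $V$ closed under nonempty subsets; $X_k$ = $k$-simplices (size $k+1$), identified with Hamming-weight-$(k+1)$ strings $x_\sigma\in\{0,1\}^n$. Oriented $k$-simplex: ordering $[v_0,\dots,v_k]$ up to even permutations, positive if an even permutation of the increasing order. $X^\pm_k=X^+_k\cup X^-_k$, $\overline\sigma$ opposite orientation, $\sigma_+$ the positive one of $\sigma,\overline\sigma$. $[v_0,\dots,v_k]$ induces on the face missing $v_j$ the orientation $(-1)^j[v_0,..,\widehat{v_j},..,v_k]$ and on a coface $\sigma\cup\{u\}$ the orientation $[u,v_0,\dots,v_k]$. For oriented $\sigma,\sigma'$ with distinct underlying simplices, $\sigma\sim_\downarrow\sigma'$ if they share a $(k-1)$-face and induce the same orientation on it; $\sigma\sim_\uparrow\sigma'$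 if their union is a $(k+1)$-simplex of $X$ on which they induce the same orientation; $\nsim_\uparrow$ is its negation; $v_\sigma$ ($v_{\sigma'}$) is the vertex of $\sigma$ not in $\sigma'$ (vice versa); $\mathrm{up}(\sigma)=\{u:\sigma\cup\{u\}\in X_{k+1}\}$. $\Delta_k$ is the matrix indexed by $X^+_k$ with $(\Delta_k)_{\sigma\sigma}=\sum_{u\in\mathrm{up}(\sigma)}w(u)^2+\sum_{v\in\sigma}w(v)^2$, $(\Delta_k)_{\sigma\sigma'}=w(v_\sigma)w(v_{\sigma'})$ if $\sigma\sim_\downarrow\sigma'$ and $\sigma\nsim_\uparrow\overline{\sigma'}$, $-w(v_\sigma)w(v_{\sigma'})$ if $\sigma\sim_\downarrow\overline{\sigma'}$ and $\sigma\nsim_\uparrow\sigma'$, $0$ otherwise. $\Theta$ is an absorbing state, $S_k=X^\pm_k\cup\{\Theta\}$; $|\sigma\rangle$ is the $(n+2)$-qubit state $|x_\sigma\rangle|00\rangle$ ($\sigma\in X^+_k$), $|x_\sigma\rangle|10\rangle$ ($\sigma\in X^-_k$), $|0^n\rangle|01\rangle$ ($\Theta$). $\Pi_k$, $\Pi^\pm_k$ project onto $\mathrm{span}\{|\sigma\rangle\}$ over $X^+_k$, $X^\pm_k$; matrices indexed by $X^+_k$ or $S_k$ act on these spans in this basis and as $0$ elsewhere. $U$ is a $\Pi_s$-projected $(a,\alpha,\epsilon)$-unitary encoding of $A$ if $\|A-a(\Pi_s\otimes\langle0^\alpha|)U(\Pi_s\otimes|0^\alpha\rangle)\|\le\epsilon$.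 For $\sigma\in X^\pm_k$: $i(\sigma)$ = position of the $i$-th $0$ of $x_\sigma$, $\tilde j(\sigma)$ = position of its $j$-th $1$. $K=\max_{\sigma\in X^\pm_k}\big(\sum_{i\in[n]}w(i)^2+\sum_{i\in[n-k-1],j\in[k+1]}w(i(\sigma))w(\tilde j(\sigma))\big)$; $\eta_\sigma=1-\frac1K\sum_{\sigma'\in X^+_k}|(\Delta_k)_{\sigma'\sigma_+}|$. $P$ on $S_k$: for $\sigma,\sigma'\in X^\pm_k$, $P_{\sigma\sigma}=(\sum_{u\in\mathrm{up}(\sigma)}w(u)^2+\sum_{v\in\sigma}w(v)^2)/K$, $P_{\sigma\sigma'}=w(v_\sigma)w(v_{\sigma'})/K$ if $\sigma\sim_\downarrow\sigma'$ and $\sigma\nsim_\uparrow\overline{\sigma'}$, $P_{\sigma\Theta}=\eta_\sigma$, $P_{\Theta\Theta}=1$, all other entries $0$. *)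

(* Defs.v *)
From HB Require Import structures.
From mathcomp Require Import all_boot all_order all_algebra.
From mathcomp Require Import mxtens zify.
Set Implicit Arguments. Unset Strict Implicit. Unset Printing Implicit Defensive.
Import Order.TTheory GRing.Theory Num.Theory.
Local Open Scope ring_scope.

Definition simplicial_complex (n : nat) (X : {set {set 'I_n}}) : Prop :=
  (forall s, s \in X -> s != set0) /\
  (forall s t : {set 'I_n}, s \in X -> t \subset s -> t != set0 -> t \in X).

Definition Xk n (X : {set {set 'I_n}}) (k : nat) : {set {set 'I_n}} :=
  [set s in X | #|s| == k.+1].

(* Oriented simplex: (underlying simplex, b) ; b = false : positive
   orientation (even permutation of increasing order), b = true : negative. *)
Definition osim n := ({set 'I_n} * bool)%type.

Definition opp n (o : osim n) : osim n := (o.1, ~~ o.2).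

Definition Xpm n (X : {set {set 'I_n}}) k : {set osim n} :=
  [set o | o.1 \in Xk X k].

Definition rk n (s : {set 'I_n}) (v : 'I_n) : nat :=
  #|[set u in s | (u < v)%N]|.

(* Sign (true = negative w.r.t. the positive=increasing orientation) of the
   orientation induced by o:
   - on the face o.1 \ {v} (v in o.1, v = v_j): (-1)^j [v_0,..,^v_j,..,v_k];
   - on the coface o.1 U {v} (v notin o.1): [v, v_0, ..., v_k].
   In both cases this is o.2 xor (parity of #{u in o.1 | u < v}). *)
Definition isign n (o : osim n) (v : 'I_n) : bool := o.2 (+) odd (rk o.1 v).

Definition adjacent n (s t : {set 'I_n}) : bool :=
  [&& s != t, #|s| == #|t| & #|s :&: t| == #|s|.-1].

Definition vdiff n (s t : {set 'I_n}) : option 'I_n := [pick v in s :\: t].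

Definition sim_down n (o o' : osim n) : bool :=
  adjacent o.1 o'.1 &&
  match vdiff o.1 o'.1, vdiff o'.1 o.1 with
  | Some a, Some b => isign o a == isign o' b
  | _, _ => false
  end.

(* sigma ~up sigma' : union is a (k+1)-simplex of X, same induced orientation *)
Definition sim_up n (X : {set {set 'I_n}}) (o o' : osim n) : bool :=
  [&& adjacent o.1 o'.1, (o.1 :|: o'.1) \in X &
  match vdiff o.1 o'.1, vdiff o'.1 o.1 with
  | Some a, Some b => isign o b == isign o' a
  | _, _ => false
  end].

Section Weights.
Variable C : numClosedFieldType.

Definition wdiff n (w : 'I_n -> C) (s t : {set 'I_n}) : C :=
  if vdiff s t is Some v then w v else 0.

Definition diagw n (X : {set {set 'I_n}}) (w : 'I_n -> C) (s : {set 'I_n}) : C :=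
  \sum_(u | (u \notin s) && ((u |: s) \in X)) w u ^+ 2 + \sum_(v in s) w v ^+ 2.

(* Delta_k, indexed by positive simplices (identified with X^+_k = X_k) *)
Definition Delta n (X : {set {set 'I_n}}) (w : 'I_n -> C) (s t : {set 'I_n}) : C :=
  if s == t then diagw X w s
  else if sim_down (s, false) (t, false) && ~~ sim_up X (s, false) (t, true)
  then wdiff w s t * wdiff w t s
  else if sim_down (s, false) (t, true) && ~~ sim_up X (s, false) (t, false)
  then - (wdiff w s t * wdiff w t s)
  else 0.

(* K = max over X^{+-}_k of
     sum_{i in [n]} w(i)^2 + sum_{i in [n-k-1], j in [k+1]} w(i(s)) w(~j(s)),
   the double sum being the sum over all (zero position, one position) pairs
   of x_s, i.e. over u notin s, v in s. *)
Definition Kval n (w : 'I_n -> C) (o : osim n) : C :=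
  \sum_(i < n) w i ^+ 2 + \sum_(u in ~: o.1) \sum_(v in o.1) w u * w v.

Definition Kconst n (X : {set {set 'I_n}}) (k : nat) (w : 'I_n -> C) : C :=
  \big[Order.max/0]_(o in Xpm X k) Kval w o.

Definition eta n (X : {set {set 'I_n}}) (k : nat) (w : 'I_n -> C) (o : osim n) : C :=
  1 - (Kconst X k w)^-1 * \sum_(s in Xk X k) `|Delta X w s (o.1)|.

(* P on S_k = X^{+-}_k + {Theta}; None stands for Theta *)
Definition Pmat n (X : {set {set 'I_n}}) (k : nat) (w : 'I_n -> C)
  (a b : option (osim n)) : C :=
  match a, b with
  | Some o, Some o' =>
      if o == o' then diagw X w o.1 / Kconst X k w
      else if sim_down o o' && ~~ sim_up X o (opp o')
      then wdiff w o.1 o'.1 * wdiff w o'.1 o.1 / Kconst X k w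
      else 0
  | Some o, None => eta X k w o
  | None, None => 1
  | None, Some _ => 0
  end.

End Weights.

Lemma pow2_gt0 (m : nat) : (0 < 2 ^ m)%N.
Proof. by rewrite expn_gt0. Qed.

(* x_s read as an n-bit integer, qubit/vertex i (0-based) being the
   (i+1)-th most significant bit *)
Definition bitsval n (s : {set 'I_n}) : nat := \sum_(i in s) 2 ^ (n.-1 - i).

Lemma bitsval_lt n (s : {set 'I_n}) : (bitsval s < 2 ^ n)%N.
Proof.
rewrite /bitsval.
apply: (@leq_ltn_trans (\sum_(i < n) 2 ^ (n.-1 - i))).
  by rewrite [X in (_ <= X)%N](bigID (mem s)) /= leq_addr.
clear s; elim: n => [|n IH]; first by rewrite big_ord0.
rewrite big_ord_recl /= subn0.
have -> : (\sum_(i < n) 2 ^ (n - bump 0 i) = \sum_(i < n) 2 ^ (n.-1 - i))%N.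
  by apply: eq_bigr => i _; rewrite /bump /= add1n subnS -subn1 subnAC subn1.
rewrite expnS; lia.
Qed.

Definition xcode n (s : {set 'I_n}) : 'I_(2 ^ n) := Ordinal (bitsval_lt s).

(* system register: n qubits, then qubits n+1, n+2 ; dimension *)
Definition sysdim n := (2 ^ n * 2 * 2)%N.

Definition qb (b : bool) : 'I_2 := if b then ord_max else ord0.

Definition basis_idx n (x : 'I_(2 ^ n)) (b1 b2 : bool) : 'I_(sysdim n) :=
  mxtens_index (mxtens_index (x, qb b1), qb b2).

(* |sigma> = |x_s>|00> (positive), |x_s>|10> (negative); |Theta> = |0^n>|01> *)
Definition ket_o n (o : osim n) : 'I_(sysdim n) := basis_idx (xcode o.1) o.2 false.
Definition ket_S n (a : option (osim n)) : 'I_(sysdim n) :=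
  if a is Some o then ket_o o else basis_idx (Ordinal (pow2_gt0 n)) false true.

Section Operators.
Variable C : numClosedFieldType.

Definition PiK n (X : {set {set 'I_n}}) k : 'M[C]_(sysdim n) :=
  \sum_(s in Xk X k) delta_mx (ket_o (s, false)) (ket_o (s, false)).
Definition PiPM n (X : {set {set 'I_n}}) k : 'M[C]_(sysdim n) :=
  \sum_(o in Xpm X k) delta_mx (ket_o o) (ket_o o).

Definition Pop n (X : {set {set 'I_n}}) k (w : 'I_n -> C) : 'M[C]_(sysdim n) :=
  \sum_(a in [set Some o | o in Xpm X k] :|: [set None])
  \sum_(b in [set Some o | o in Xpm X k] :|: [set None])
    Pmat X k w a b *: delta_mx (ket_S a) (ket_S b).
Definition Deltaop n (X : {set {set 'I_n}}) k (w : 'I_n -> C) : 'M[C]_(sysdim n) :=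
  \sum_(s in Xk X k) \sum_(t in Xk X k)
    Delta X w s t *: delta_mx (ket_o (s, false)) (ket_o (t, false)).

Definition compress0 m (a : nat) (A : 'M[C]_(m * 2 ^ a)) : 'M[C]_m :=
  \matrix_(i, j) A (mxtens_index (i, Ordinal (pow2_gt0 a)))
                   (mxtens_index (j, Ordinal (pow2_gt0 a))).

Definition adjmx m (A : 'M[C]_m) : 'M[C]_m := (map_mx Num.conj A)^T.

Definition Hgate : 'M[C]_2 :=
  (sqrtC 2)^-1 *: \matrix_(i, j) (if ((i : nat) == 1%N) && ((j : nat) == 1%N) then -1 else 1).
Definition Zgate : 'M[C]_2 :=
  \matrix_(i, j) (if i == j then (if (i : nat) == 0%N then 1 else -1) else 0).

Definition HZlift n (a : nat) : 'M[C]_(sysdim n * 2 ^ a) :=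
  ((1%:M : 'M[C]_(2 ^ n)) *t (Hgate *m Zgate) *t (1%:M : 'M[C]_2))
    *t (1%:M : 'M[C]_(2 ^ a)).

End Operators.

(* Main.v *)
Require Import Defs.
From HB Require Import structures.
From mathcomp Require Import all_boot all_order all_algebra.
From mathcomp Require Import mxtens zify ring.
Set Implicit Arguments. Unset Strict Implicit. Unset Printing Implicit Defensive.
Import Order.TTheory GRing.Theory Num.Theory.
Local Open Scope ring_scope.

Lemma bits_inj m (f g : 'I_m -> bool) :
  (\sum_(i < m) f i * 2 ^ i = \sum_(i < m) g i * 2 ^ i)%N -> f =1 g.
Proof.
elim: m f g => [|m IH] f g; first by move=> _ [].
rewrite !big_ord_recl /= !expn0 !muln1.
have E (h : _ -> bool) : (\sum_(i < m) h (lift ord0 i) * 2 ^ (bump 0 i) = 2 * \sum_(i < m) h (lift ord0 i) * 2 ^ i)%N.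
  rewrite big_distrr /=; apply: eq_bigr => i _; rewrite /bump /= add1n expnS; lia.
rewrite !E => H.
have H0 : f ord0 = g ord0.
  by move: H; case: (f ord0); case: (g ord0) => //= H; lia.
rewrite H0 in H.
have {}H : (\sum_(i < m) f (lift ord0 i) * 2 ^ i = \sum_(i < m) g (lift ord0 i) * 2 ^ i)%N by lia.
have Hl := IH _ _ H.
move=> x; case: (unliftP ord0 x) => [y ->|->] //.
Qed.

Lemma bitsval_inj n : injective (@bitsval n).
Proof.
move=> s t H.
have E (u : {set 'I_n}) : bitsval u = (\sum_(j < n) (rev_ord j \in u) * 2 ^ j)%N.
  rewrite /bitsval big_mkcond (reindex_inj rev_ord_inj) /=; apply: eq_bigr => j _.
  case: (rev_ord j \in u); rewrite ?mul1n ?mul0n //; congr (2 ^ _)%N.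
  case: j => j Hj /=; lia.
rewrite !E in H; have := bits_inj H => Hb.
apply/setP => x; have := Hb (rev_ord x); by rewrite rev_ordK.
Qed.

Lemma xcode_inj n : injective (@xcode n).
Proof. by move=> s t /(congr1 val) /= /bitsval_inj. Qed.

Lemma qb_inj : injective qb.
Proof. by case; case. Qed.

Lemma mxtens_index_inj m p : injective (@mxtens_index m p).
Proof. exact: can_inj (@mxtens_indexK m p). Qed.

Lemma basis_idx_inj n x b1 b2 y c1 c2 :
  @basis_idx n x b1 b2 = basis_idx y c1 c2 -> [/\ x = y, b1 = c1 & b2 = c2].
Proof.
rewrite /basis_idx => /mxtens_index_inj/pair_equal_spec [/mxtens_index_inj/pair_equal_spec [-> /qb_inj ->] /qb_inj ->].
by [].
Qed.

Lemma ket_o_inj n : injective (@ket_o n).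
Proof.
move=> [s b] [t c] /basis_idx_inj [/xcode_inj /= -> -> _] //.
Qed.

Lemma ket_S_inj n : injective (@ket_S n).
Proof.
move=> [a|] [b|] //=.
- by move/ket_o_inj ->.
- by case: a => s c; rewrite /ket_o => /basis_idx_inj [].
- by case: b => s c; rewrite /ket_o => /basis_idx_inj [].
Qed.

Section Mx.
Variable C : numClosedFieldType.

Lemma delta_sand N (B : 'M[C]_N) a c :
  delta_mx a a *m B *m delta_mx c c = B a c *: delta_mx a c.
Proof.
apply/matrixP => i j; rewrite !mxE (bigD1 c) //= big1 ?addr0; last first.
  by move=> l /negbTE H; rewrite [delta_mx c c l j]mxE H mulr0.
rewrite !mxE (bigD1 a) //= big1 ?addr0; last first.
  by move=> l /negbTE H; rewrite mxE H andbF mul0r.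
rewrite !mxE !eqxx /=.
by case: (i == a); case: (j == c); rewrite /= ?mul1r ?mulr1 ?mul0r ?mulr0.
Qed.

Lemma sandwich N (I J : finType) (f : I -> 'I_N) (g : J -> 'I_N)
  (A : {set I}) (A' : {set J}) (B : 'M[C]_N) :
  (\sum_(x in A) delta_mx (f x) (f x)) *m B *m (\sum_(y in A') delta_mx (g y) (g y))
  = \sum_(x in A) \sum_(y in A') B (f x) (g y) *: delta_mx (f x) (g y).
Proof.
rewrite mulmx_suml mulmx_suml; apply: eq_bigr => x _.
rewrite mulmx_sumr; apply: eq_bigr => y _; exact: delta_sand.
Qed.

Lemma sum_entry N (I J : finType) (f : I -> 'I_N) (g : J -> 'I_N)
  (A : {set I}) (A' : {set J}) (c : I -> J -> C) a b :
  injective f -> injective g -> a \in A -> b \in A' ->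
  (\sum_(x in A) \sum_(y in A') c x y *: delta_mx (f x) (g y) : 'M[C]_N) (f a) (g b)
  = c a b.
Proof.
move=> fi gi aA bA.
rewrite summxE (bigD1 a aA) /= [X in _ + X]big1 ?addr0; last first.
  move=> x /andP [_ xa]; rewrite summxE big1 // => y _.
  by rewrite !mxE (inj_eq fi) eq_sym (negbTE xa) mulr0.
rewrite summxE (bigD1 b bA) /= [X in _ + X]big1 ?addr0; last first.
  move=> y /andP [_ yb].
  by rewrite !mxE (inj_eq gi) eq_sym (negbTE yb) andbF mulr0.
by rewrite !mxE !eqxx mulr1.
Qed.

Lemma sum_pair m p (F : 'I_(m * p) -> C) :
  \sum_(l < m * p) F l = \sum_(x < m) \sum_(y < p) F (mxtens_index (x, y)).
Proof.
rewrite pair_big /= (reindex (@mxtens_index m p)) /=.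
  by apply: eq_bigr => -[x y] _.
by exists (@mxtens_unindex m p) => x _; [apply: mxtens_indexK | apply: mxtens_unindexK].
Qed.

Lemma compress_lift m a (M : 'M[C]_m) (U : 'M[C]_(m * 2 ^ a)) :
  compress0 (M *t (1%:M : 'M[C]_(2 ^ a)) *m U) = M *m compress0 U.
Proof.
apply/matrixP => i j; rewrite !mxE sum_pair; apply: eq_bigr => x _.
rewrite (bigD1 (Ordinal (pow2_gt0 a))) //= big1 ?addr0; last first.
  by move=> y yn; rewrite tensmxE mxE eq_sym (negbTE yn) mulr0 mul0r.
by rewrite tensmxE !mxE eqxx mulr1.
Qed.

End Mx.

Lemma one_entry (C : numClosedFieldType) m (i j : 'I_m) : (1%:M : 'M[C]_m) i j = (i == j)%:R.
Proof. by rewrite mxE. Qed.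

Lemma HZ00 (C : numClosedFieldType) : (Hgate C *m Zgate C) ord0 ord0 = (sqrtC 2)^-1.
Proof.
rewrite !mxE big_ord_recl big_ord_recl big_ord0 !mxE /=.
by rewrite !mulr1 !mulr0 !addr0.
Qed.

Lemma HZ01 (C : numClosedFieldType) : (Hgate C *m Zgate C) ord0 (lift ord0 ord0) = - (sqrtC 2)^-1.
Proof.
rewrite !mxE big_ord_recl big_ord_recl big_ord0 !mxE /=.
by rewrite !mulr1 !mulr0 !addr0 add0r mulrN1.
Qed.

Lemma Xpm_in n (X : {set {set 'I_n}}) k s b : ((s, b) \in Xpm X k) = (s \in Xk X k).
Proof. by rewrite /Xpm inE. Qed.

Lemma sd_flip n (s t : {set 'I_n}) : sim_down (s, true) (t, false) = sim_down (s, false) (t, true).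
Proof.
rewrite /sim_down /isign /=; case: (vdiff s t) => [a|]; case: (vdiff t s) => [b|] //=.
by case: (odd _); case: (odd _); rewrite ?andbT ?andbF.
Qed.

Lemma su_flip n X (s t : {set 'I_n}) : sim_up X (s, true) (t, true) = sim_up X (s, false) (t, false).
Proof.
rewrite /sim_up /isign /=; case: (vdiff s t) => [a|]; case: (vdiff t s) => [b|] //=.
by case: (odd _); case: (odd _); rewrite ?andbT ?andbF.
Qed.

Lemma sd_excl n (s t : {set 'I_n}) : sim_down (s, false) (t, false) && sim_down (s, false) (t, true) = false.
Proof.
rewrite /sim_down /isign /=; case: (vdiff s t) => [a|]; case: (vdiff t s) => [b|] //=;
  rewrite ?andbF //.
case: (adjacent s t); case: (odd _); case: (odd _) => //.
Qed.

Lemma sd_refl n (s : {set 'I_n}) b c : sim_down (s, b) (s, c) = false.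
Proof. by rewrite /sim_down /adjacent eqxx. Qed.

Unset Implicit Arguments.

Theorem proposition3p9 (C : numClosedFieldType) (n : nat)
  (X : {set {set 'I_n}}) (w : 'I_n -> C) (k alpha : nat)
  (U : 'M[C]_(sysdim n * 2 ^ alpha)) :
  simplicial_complex X ->
  (forall v, 0 < w v) ->
  U *m adjmx U = 1%:M -> adjmx U *m U = 1%:M ->
  PiPM C X k *m compress0 U *m PiPM C X k = PiPM C X k *m Pop X k w *m PiPM C X k ->
  let V := HZlift C n alpha *m U in
  PiK C X k *m compress0 V *m PiK C X k
    = (Kconst X k w * sqrtC 2)^-1 *: Deltaop X k w.
Proof.
move=> _ _ _ _ H V.
have HE a b : a \in Xpm X k -> b \in Xpm X k ->
    compress0 U (ket_o a) (ket_o b) = Pmat X k w (Some a) (Some b).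
  move=> aX bX; have := congr1 (fun M : 'M[C]_(sysdim n) => M (ket_o a) (ket_o b)) H.
  rewrite /PiPM !sandwich /= !sum_entry //; try exact: (@ket_o_inj n).
  move=> ->; rewrite /Pop.
  have SS c : c \in Xpm X k -> Some c \in [set Some o | o in Xpm X k] :|: [set None].
    by move=> cX; rewrite in_setU; apply/orP; left; apply/imsetP; exists c.
  exact: (@sum_entry C _ _ _ (@ket_S n) (@ket_S n) _ _ _ (Some a) (Some b) (@ket_S_inj n) (@ket_S_inj n) (SS _ aX) (SS _ bX)).
rewrite /V /HZlift compress_lift /PiK sandwich /Deltaop scaler_sumr.
apply: eq_bigr => s sX; rewrite scaler_sumr; apply: eq_bigr => t tX.
rewrite scalerA; congr (_ *: _).
rewrite mxE sum_pair.
rewrite [in ket_o (s, false)]/ket_o /basis_idx /=.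
under eq_bigr => x _ do rewrite big_ord_recl big_ord_recl big_ord0 !tensmxE !one_entry /= mulr0 mul0r !addr0 mulr1.
rewrite sum_pair.
under eq_bigr => x _ do under eq_bigr => y _ do rewrite !tensmxE !one_entry.
rewrite (bigD1 (xcode s)) //= [X in _ + X]big1 ?addr0; last first.
  move=> x xs; apply: big1 => y _; by rewrite eq_sym (negbTE xs) !mul0r.
rewrite big_ord_recl big_ord_recl big_ord0 addr0 eqxx !mul1r.
have -> : mxtens_index (mxtens_index (xcode s, ord0), ord0) = ket_o (s, false) :> 'I_(sysdim n) by [].
have -> : mxtens_index (mxtens_index (xcode s, lift ord0 ord0), ord0) = ket_o (s, true) :> 'I_(sysdim n).
  by rewrite /ket_o /basis_idx /=; congr mxtens_index; congr (_, _); congr mxtens_index; congr (_, _); apply: val_inj.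
rewrite HZ00 HZ01 !HE ?Xpm_in // /Pmat /= /Delta !xpair_eqE andbT andbF invfM.
have [<-|st] := eqP.
  rewrite sd_refl /=; ring.
rewrite /Defs.opp /= sd_flip su_flip.
move: (sd_excl s t).
case: (sim_down (s, false) (t, false)); case: (sim_down (s, false) (t, true)) => //= _;
  case: (sim_up X (s, false) (t, true)); case: (sim_up X (s, false) (t, false)) => /=; ring.
Qed.
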